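(* Let $n$ be a positive integer, let $f\in C[0,1]$ and $p=P_{\mathcal{P}_n}(f)$. For any $\mu,\gamma\in C^*[0,1]$: (i) if $\mu([0,1])\neq\gamma([0,1])$, then $\gamma\notin\widehat{D}^*P_{\mathcal{P}_n}(f)(\mu)$ and $\mu\notin\widehat{D}^*P_{\mathcal{P}_n}(f)(\gamma)$; (ii) if $\mu([0,1])\neq 0$, then $\theta^*\notin\widehat{D}^*P_{\mathcal{P}_n}(f)(\mu)$ and $\mu\notin\widehat{D}^*P_{\mathcal{P}_n}(f)(\theta^* )$; (iii) if $\langle\gamma,f-p\rangle<0$, then $\gamma\notin\widehat{D}^*P_{\mathcal{P}_n}(f)(\mu)$ for every $\mu\in C^*[0,1]$.
   Context: $C[0,1]$ is the Banach space of continuous real-valued functions on $[0,1]$ with the maximum norm $\|f\|=\max_{0\le t\le 1}|f(t)|$. For a nonnegative integer $n$, $\mathcal{P}_n\subseteq C[0,1]$ denotes the closed subspace of real polynomials of degree at most $n$. The metric projection $P_{\mathcal{P}_n}:C[0,1]\to\mathcal{P}_n$ maps $f$ to the unique $p\in\mathcal{P}_n$ with $\|f-p\|=\min_{q\in\mathcal{P}_n}\|f-q\|$ (it is single-valued and continuous). The dual $C^*[0,1]$ is identified (Riesz representation) with the space of real regular countably additive Borel set functions (signed measures) $\mu$ on $[0,1]$, with pairing $\langle\mu,f\rangle=\int_0^1 f(t)\,\mu(dt)$; $\mu([0,1])$ is the value of $\mu$ on the whole interval, and $\theta^*$ is the zero measure. For $f\in C[0,1]$ and $\mu\in C^*[0,1]$,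 the Mordukhovich derivative (coderivative) of $P_{\mathcal{P}_n}$ at $f$ applied to $\mu$ is the set $$\widehat{D}^*P_{\mathcal{P}_n}(f)(\mu)=\Big\{\varphi\in C^*[0,1]:\ \limsup_{g\to f,\ g\neq f}\frac{\langle\varphi,g-f\rangle-\langle\mu,P_{\mathcal{P}_n}(g)-P_{\mathcal{P}_n}(f)\rangle}{\|g-f\|+\|P_{\mathcal{P}_n}(g)-P_{\mathcal{P}_n}(f)\|}\le 0\Big\}.$$ *)

(* Defs.v *)
From HB Require Import structures.
From mathcomp Require Import all_boot all_order all_algebra.
From mathcomp Require Import all_classical all_reals all_analysis.
Set Implicit Arguments. Unset Strict Implicit. Unset Printing Implicit Defensive.
Import Order.TTheory GRing.Theory Num.Theory.
Import numFieldNormedType.Exports.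
Local Open Scope classical_set_scope.
Local Open Scope ring_scope.

Section Defs.
Variable R : realType.

Definition I01 : set R := `[0, 1]%classic.

(* f (a function R -> R) represents an element of C[0,1]: only its
   restriction to [0,1] matters, and it must be continuous there. *)
Definition Ccont (f : R -> R) : Prop := {within I01, continuous f}.

Definition supnorm (f : R -> R) : R := sup [set `|f t| | t in I01].

Definition polyfun (p : {poly R}) : R -> R := fun t => p.[t].

Definition best_approx (n : nat) (f : R -> R) (p : {poly R}) : Prop :=
  (size p <= n.+1)%N /\
  forall q : {poly R}, (size q <= n.+1)%N ->
    supnorm (f \- polyfun p) <= supnorm (f \- polyfun q).

Definition metric_proj (n : nat) (P : (R -> R) -> {poly R}) : Prop :=
  forall g, Ccont g -> best_approx n g (P g).

(* elements of the dual C*[0,1]: bounded linear functionals on C[0,1]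
   (Riesz: <mu, f> = \int f dmu) *)
Definition dual (L : (R -> R) -> R) : Prop :=
  [/\ (forall g h, Ccont g -> Ccont h -> L (g \+ h) = L g + L h),
      (forall (a : R) g, Ccont g -> L (fun t => a * g t) = a * L g) &
      exists M : R, forall g, Ccont g -> `|L g| <= M * supnorm g].

(* mu([0,1]) = <mu, 1> *)
Definition total_mass (L : (R -> R) -> R) : R := L (fun _ => 1).

Definition zero_dual : (R -> R) -> R := fun _ => 0.

(* phi \in \hat D^* P(f)(mu) : phi in C* and the limsup (g -> f, g <> f)
   of the quotient is <= 0, written with epsilon-delta. *)
Definition coderiv (n : nat) (P : (R -> R) -> {poly R}) (f : R -> R)
    (mu phi : (R -> R) -> R) : Prop :=
  dual phi /\
  forall eps : R, 0 < eps -> exists delta : R, 0 < delta /\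
    forall g, Ccont g -> 0 < supnorm (g \- f) < delta ->
      (phi (g \- f) - mu (polyfun (P g - P f))) /
        (supnorm (g \- f) + supnorm (polyfun (P g - P f))) <= eps.

End Defs.

(* Main.v *)
Require Import Defs.
From HB Require Import structures.
From mathcomp Require Import all_boot all_order all_algebra.
From mathcomp Require Import all_classical all_reals all_analysis.
From mathcomp Require Import ring lra.
Import Order.TTheory GRing.Theory Num.Theory.
Import numFieldNormedType.Exports.
Local Open Scope classical_set_scope.
Local Open Scope ring_scope.
Set Implicit Arguments. Unset Strict Implicit.
Section S.
Variable R : realType.
Implicit Types f g h : R -> R.
Local Notation II := (@I01 R).
Lemma Cc_abs f : Ccont f -> Ccont (fun x => `|f x|).
Proof. move=> cf x. apply: continuous_comp; [exact: cf| exact: norm_continuous]. Qed.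

Lemma I01_0 : II 0. Proof. by rewrite /I01 /= in_itv /= lexx ler01. Qed.

Lemma supnorm_char h M : (forall t, II t -> `|h t| <= M) ->
  (exists t, II t /\ `|h t| = M) -> supnorm h = M.
Proof.
move=> ub [t0 [It0 ht0]]; rewrite /supnorm; apply/eqP; rewrite eq_le; apply/andP; split.
  apply: ge_sup; first by exists `|h t0|, t0.
  by move=> _ [t It <-]; exact: ub.
have hs : has_sup [set `|h t| | t in II].
  split; first by exists `|h t0|, t0.
  by exists M => _ [t It <-]; exact: ub.
rewrite -ht0; apply: sup_upper_bound => //; by exists t0.
Qed.

Lemma supnorm_attain h : Ccont h -> exists t, II t /\
  supnorm h = `|h t| /\ forall s, I01 s -> `|h s| <= `|h t|.
Proof.
move=> ch; have [c Ic cmax] := EVT_max ler01 (Cc_abs ch).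
exists c; split; first by [].
split; last by move=> s Is; apply: cmax.
apply: supnorm_char; first by move=> s Is; apply: cmax.
by exists c.
Qed.

Lemma supnorm_ge h t : Ccont h -> II t -> `|h t| <= supnorm h.
Proof. move=> ch It; have [c [Ic [-> cm]]] := supnorm_attain ch; exact: cm. Qed.

Lemma supnorm_le h M : Ccont h -> (forall t, II t -> `|h t| <= M) -> supnorm h <= M.
Proof. move=> ch ub; have [c [Ic [-> cm]]] := supnorm_attain ch; exact: ub. Qed.

Lemma supnorm_ge0 h : Ccont h -> 0 <= supnorm h.
Proof. move=> ch; apply: le_trans (supnorm_ge ch I01_0). done. Qed.

Lemma supnorm_scale (a : R) h : Ccont h -> supnorm (fun x => a * h x) = `|a| * supnorm h.
Proof.
move=> ch; have [c [Ic [-> cm]]] := supnorm_attain ch.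
apply: supnorm_char; last by exists c; rewrite normrM.
move=> t It; rewrite normrM; apply: ler_wpM2l => //; exact: cm.
Qed.

Lemma supnorm_cst (c : R) : supnorm (fun _ => c) = `|c|.
Proof. apply: supnorm_char => //; exists 0; split => //; exact: I01_0. Qed.
Lemma normE (x : R) : (0 <= x /\ `|x| = x) \/ (x < 0 /\ `|x| = - x).
Proof. case: (lerP 0 x) => h; [left; rewrite ger0_norm | right; rewrite ltr0_norm] => //. Qed.

Lemma CcD f g : Ccont f -> Ccont g -> Ccont (f \+ g).
Proof. move=> cf cg x; apply: continuousD; [exact: cf|exact: cg]. Qed.
Lemma CcM f g : Ccont f -> Ccont g -> Ccont (f \* g).
Proof. move=> cf cg x; apply: continuousM; [exact: cf|exact: cg]. Qed.
Lemma CcN f : Ccont f -> Ccont (fun x => - f x).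
Proof. move=> cf x; apply: continuousN; exact: cf. Qed.
Lemma Cc_cst (c : R) : Ccont (fun _ => c).
Proof. apply: continuous_subspaceT; exact: cst_continuous. Qed.
Lemma Cc_poly (p : {poly R}) : Ccont (polyfun p).
Proof. apply: continuous_subspaceT; exact: continuous_horner. Qed.

Lemma pos_prod (a b : R) : 0 < a * b -> (0 < a /\ 0 < b) \/ (a < 0 /\ b < 0).
Proof.
move=> ab; case: (ltrgtP a 0) => a0.
- by right; split => //; move: ab; rewrite nmulr_rgt0.
- by left; split => //; move: ab; rewrite pmulr_rgt0.
- by move: ab; rewrite a0 mul0r ltxx.
Qed.

Lemma Cc_ext f g : (forall x, f x = g x) -> Ccont f -> Ccont g.
Proof. by move=> fg; have -> : f = g by apply/funext. Qed.

Lemma sign_fact (a b E : R) : 0 < a * b -> `|a| <= E -> `|b| < E -> `|a - b| < E.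
Proof.
move=> /pos_prod ab; case: (normE a) => [[a0 ->]|[a0 ->]]; case: (normE b) => [[b0 ->]|[b0 ->]];
  case: (normE (a - b)) => [[c0 ->]|[c0 ->]]; lra.
Qed.
Lemma eta_fact (a y E : R) : `|a| <= E -> (`|a| = E -> 0 < y) -> 0 < E - `|a| + (y + `|y|) / 2.
Proof.
move=> H1 H2; case: (ltrP `|a| E) => h3.
  case: (normE y) => [[h ->]|[h ->]]; lra.
have : `|a| = E by apply/eqP; rewrite eq_le H1 h3.
move/H2 => ?.
case: (normE y) => [[h ->]|[h ->]]; lra.
Qed.

Lemma improve e (r : {poly R}) : Ccont e ->
  (forall x, II x -> `|e x| = supnorm e -> 0 < r.[x] * e x) ->
  exists2 eps, 0 < eps & supnorm (fun x => e x - eps * r.[x]) < supnorm e.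
Proof.
move=> ce hyp; set E := supnorm e.
have [c0 [Ic0 [Ec0 _]]] := supnorm_attain ce; rewrite -/E in Ec0.
have Epos : 0 < E.
  have := hyp c0 Ic0 (esym Ec0); rewrite Ec0.
  case: (normE (e c0)) => [[h ->]|[h ->]]; last lra.
  by rewrite le_eqVlt in h; case/orP: h => [/eqP <-|//]; rewrite mulr0 ltxx.
pose phi := fun x => (E - `|e x|) + (r.[x] * e x + `|r.[x] * e x|) * 2^-1.
have cphi : Ccont phi.
  have H := (CcD (CcD (@Cc_cst E) (CcN (Cc_abs ce))) (CcM (CcD (CcM (@Cc_poly r) ce) (Cc_abs (CcM (@Cc_poly r) ce))) (@Cc_cst (2^-1)))). by apply: (Cc_ext _ H).
have [c Ic minf] := EVT_min ler01 cphi.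
set eta := phi c.
have eta_pos : 0 < eta.
  by apply: eta_fact; [exact: supnorm_ge ce Ic | exact: hyp c Ic].
pose M := supnorm (polyfun r).
have M0 : 0 <= M := supnorm_ge0 (@Cc_poly r).
pose m := Num.min eta E.
have m0 : 0 < m by rewrite lt_min eta_pos Epos.
have meta : m <= eta by rewrite ge_min lexx.
have mE : m <= E by rewrite ge_min lexx orbT.
pose eps := m / (2 * (M + 1)).
have eps0 : 0 < eps by apply: divr_gt0 => //; lra.
have epsM : eps * M < m.
  have : eps * (2 * (M + 1)) = m by rewrite /eps mulfVK //; apply/eqP => H; lra.
  move=> H; nra.
exists eps => //.
have cg : Ccont (fun x => e x - eps * r.[x]).
  by apply: (Cc_ext _ (CcD ce (CcN (CcM (@Cc_cst eps) (@Cc_poly r))))).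
have [x [Ix [-> _]]] := supnorm_attain cg.
have rx : `|r.[x]| <= M := supnorm_ge (@Cc_poly r) Ix.
have ex : `|e x| <= E := supnorm_ge ce Ix.
have bx : `|eps * r.[x]| < E.
  rewrite normrM (gtr0_norm eps0); apply: (le_lt_trans _ (lt_le_trans epsM mE)).
  by apply: ler_wpM2l => //; apply: ltW.
case: (ltrP 0 (r.[x] * e x)) => hy.
  apply: sign_fact => //; rewrite mulrCA mulrC; apply: mulr_gt0 => //; by rewrite mulrC.
have := minf x Ix; rewrite -/eta /phi (ler0_norm hy).
have ebx : `|eps * r.[x]| < m by rewrite normrM (gtr0_norm eps0); apply: le_lt_trans epsM; apply: ler_wpM2l => //; apply: ltW.
move=> H; apply: (le_lt_trans (ler_normB _ _)); lra.
Qed.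
Lemma lagrange (s : seq R) (e : R -> R) : uniq s ->
  exists r : {poly R}, (size r <= size s)%N /\ forall x, x \in s -> r.[x] = e x.
Proof.
elim: s => [|x s IH] /=; first by move=> _; exists 0; split => //; rewrite size_poly0.
move=> /andP [xs us]; have [r' [sr' er']] := IH us.
set w := \prod_(y <- s) ('X - y%:P).
have wx : w.[x] != 0 by rewrite -/(root w x) root_prod_XsubC.
exists (r' + ((e x - r'.[x]) / w.[x]) *: w); split.
  apply: leq_trans (size_polyD _ _) _; rewrite geq_max; apply/andP; split.
    by apply: leq_trans sr' _.
  by apply: leq_trans (size_scale_leq _ _) _; rewrite size_prod_XsubC.
move=> y; rewrite in_cons => /orP [/eqP ->|ys].
  by rewrite hornerD hornerZ divfK // addrC subrK.
have wy : w.[y] = 0 by apply/eqP; rewrite -/(root w y) root_prod_XsubC.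
by rewrite hornerD hornerZ wy mulr0 addr0 er'.
Qed.

Lemma poly_eq_on (q1 q2 : {poly R}) n s :
  (size q1 <= n.+1)%N -> (size q2 <= n.+1)%N -> uniq s -> size s = n.+1 ->
  (forall x, x \in s -> q1.[x] = q2.[x]) -> q1 = q2.
Proof.
move=> s1 s2 us ss e; apply/eqP; rewrite -subr_eq0; apply/negPn/negP => nz.
have := max_poly_roots nz _ us.
have -> : all (root (q1 - q2)) s.
  by apply/allP => x xs; rewrite /root hornerD hornerN e // subrr.
move=> /(_ isT); rewrite ss ltnNge; move/negP; apply.
apply: leq_trans (size_polyD _ _) _; rewrite size_polyN geq_max s1 s2 //.
Qed.

Lemma avg_fact (a b E : R) : `|a| <= E -> `|b| <= E -> `|(a + b) / 2| = E -> a = b.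
Proof.
move=> ha hb hab; have : `|(a + b) / 2| <= E by rewrite hab.
have : E <= `|(a + b) / 2| by rewrite hab.
case: (normE a) ha => [[h ->]|[h ->]] ha; case: (normE b) hb => [[h' ->]|[h' ->]] hb;
  case: (normE ((a + b) / 2)) => [[h'' ->]|[h'' ->]] H1 H2;
  apply/eqP; rewrite eq_le; apply/andP; split; lra.
Qed.

Lemma grid_pts n : exists s : seq R, [/\ uniq s, size s = n.+1 & forall x, x \in s -> II x].
Proof.
exists [seq i%:R / n.+1%:R | i <- iota 0 n.+1]; split.
- rewrite map_inj_uniq ?iota_uniq // => i j /mulIf H; apply/eqP; rewrite -(eqr_nat R).
  by apply/eqP; apply: H; rewrite invr_eq0 pnatr_eq0.
- by rewrite size_map size_iota.
- move=> x /mapP [i]; rewrite mem_iota add0n => /andP [_ hi] ->.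
  rewrite /I01 /= in_itv /=; apply/andP; split.
    by apply: divr_ge0; rewrite ler0n.
  by rewrite ler_pdivrMr ?ltr0n // mul1r ler_nat ltnW.
Qed.

Lemma no_small_Z n g q s : Ccont g -> best_approx n g q ->
  0 < supnorm (g \- polyfun q) -> uniq s -> (size s <= n.+1)%N ->
  (forall x, II x -> `|g x - q.[x]| = supnorm (g \- polyfun q) -> x \in s) -> False.
Proof.
move=> cg [sq bq] Epos us ss hZ.
set e := g \- polyfun q.
have ce : Ccont e by apply: (Cc_ext _ (CcD cg (CcN (@Cc_poly q)))).
have [r [sr er]] := lagrange e us.
have [eps eps0 H] : exists2 eps, 0 < eps & supnorm (fun x => e x - eps * r.[x]) < supnorm e.
  apply: improve => // x Ix Zx.
  rewrite er; last exact: hZ.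
  have : e x != 0.
    apply/eqP => e0; move: Zx; rewrite e0 normr0 => E0; move: Epos; rewrite -/e -E0 ltxx //.
  by move=> nz; rewrite -expr2 exprn_even_gt0.
have : (size (q + eps *: r)%R <= n.+1)%N.
  apply: leq_trans (size_polyD _ _) _; rewrite geq_max sq /=.
  exact: leq_trans (size_scale_leq _ _) (leq_trans sr ss).
move/bq; have -> : g \- polyfun (q + eps *: r) = (fun x => e x - eps * r.[x]).
  by apply/funext => x; rewrite /e /polyfun /= hornerD hornerZ; ring.
by move=> H'; have := le_lt_trans H' H; rewrite ltxx.
Qed.
Lemma Z_big n g q : Ccont g -> best_approx n g q ->
  0 < supnorm (g \- polyfun q) ->
  exists s, [/\ uniq s, size s = n.+1 &
    forall x, x \in s -> II x /\ `|g x - q.[x]| = supnorm (g \- polyfun q)].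
Proof.
move=> cg bq Epos.
suff : forall k, (k <= n.+1)%N -> exists s, [/\ uniq s, size s = k &
    forall x, x \in s -> II x /\ `|g x - q.[x]| = supnorm (g \- polyfun q)].
  by apply.
elim=> [|k IH] hk; first by exists [::].
have [s [us ss hs]] := IH (ltnW hk).
have [[x [Ix [Zx xs]]]|nex] := pselect (exists x, II x /\
   `|g x - q.[x]| = supnorm (g \- polyfun q) /\ x \notin s).
  exists (x :: s); split => /=; [by rewrite xs us | by rewrite ss |].
  by move=> y; rewrite in_cons => /orP [/eqP ->|/hs].
exfalso; apply: (no_small_Z cg bq Epos us); first by rewrite ss ltnW.
move=> x Ix Zx; apply/negPn/negP => xs; apply: nex; by exists x.
Qed.

Lemma best_unique n g q1 q2 : Ccont g -> best_approx n g q1 -> best_approx n g q2 -> q1 = q2.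
Proof.
move=> cg b1 b2; have [s1 h1] := b1; have [s2 h2] := b2.
set E := supnorm (g \- polyfun q1).
have E21 : supnorm (g \- polyfun q2) = E.
  by apply/eqP; rewrite eq_le h2 // h1.
have c1 : Ccont (g \- polyfun q1) by apply: (Cc_ext _ (CcD cg (CcN (@Cc_poly q1)))).
have c2 : Ccont (g \- polyfun q2) by apply: (Cc_ext _ (CcD cg (CcN (@Cc_poly q2)))).
have b1x : forall x, II x -> `|g x - q1.[x]| <= E by move=> x Ix; exact: (supnorm_ge c1 Ix).
have b2x : forall x, II x -> `|g x - q2.[x]| <= E by move=> x Ix; rewrite -E21; exact: (supnorm_ge c2 Ix).
have E0 : 0 <= E by apply: supnorm_ge0.
case: (ltrP 0 E) => Epos; last first.
  have [s [us ss hs]] := grid_pts n.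
  apply: (poly_eq_on s1 s2 us ss) => x /hs Ix.
  have := b1x x Ix; have := b2x x Ix.
  rewrite (_ : E = 0); last by apply/eqP; rewrite eq_le Epos E0.
  rewrite !normr_le0 !subr_eq0 => /eqP <- /eqP <- //.
pose q := 2^-1 *: (q1 + q2).
have sq : (size q <= n.+1)%N.
  apply: leq_trans (size_scale_leq _ _) _; apply: leq_trans (size_polyD _ _) _.
  by rewrite geq_max s1 s2.
have qx : forall x, g x - q.[x] = ((g x - q1.[x]) + (g x - q2.[x])) / 2.
  by move=> x; rewrite /q hornerZ hornerD; field.
have cq : Ccont (g \- polyfun q) by apply: (Cc_ext _ (CcD cg (CcN (@Cc_poly q)))).
have Eq : supnorm (g \- polyfun q) = E.
  apply/eqP; rewrite eq_le h1 // andbT; apply: supnorm_le => // x Ix /=.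
  rewrite /polyfun qx normrM.
  have -> : `|2^-1 : R| = 2^-1 by rewrite ger0_norm // invr_ge0 ler0n.
  have := ler_normD (g x - q1.[x]) (g x - q2.[x]).
  have := b1x x Ix; have := b2x x Ix; lra.
have bq : best_approx n g q.
  by split => // q' sq'; rewrite Eq; apply: h1.
have Eqpos : 0 < supnorm (g \- polyfun q) by rewrite Eq.
have [s [us ss hs]] := Z_big cg bq Eqpos.
apply: (poly_eq_on s1 s2 us ss) => x /hs [Ix Zx].
have := avg_fact (b1x x Ix) (b2x x Ix).
rewrite -qx Zx Eq => /(_ erefl) H; have : g x - q1.[x] + q1.[x] = g x - q2.[x] + q1.[x] by rewrite H.
rewrite subrK => H2; apply/eqP; rewrite -subr_eq0; apply/eqP; lra.
Qed.
Lemma Cc_sub_poly f (p : {poly R}) : Ccont f -> Ccont (f \- polyfun p).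
Proof. move=> cf; exact: (Cc_ext _ (CcD cf (CcN (@Cc_poly p)))). Qed.

Lemma proj_shift n P f (c : R) : metric_proj n P -> Ccont f ->
  P (fun x => f x + c) = P f + c%:P.
Proof.
move=> hP cf; set g := fun x => f x + c.
have cg : Ccont g by apply: (Cc_ext _ (CcD cf (@Cc_cst c))).
apply: (best_unique cg (hP g cg)).
have [sf bf] := hP f cf.
split.
  apply: leq_trans (size_polyD _ _) _; rewrite geq_max sf /=.
  by apply: leq_trans (size_polyC_leq1 _) _.
move=> q sq.
have -> : g \- polyfun (P f + c%:P) = f \- polyfun (P f).
  by apply/funext => x; rewrite /g /polyfun /= hornerD hornerC; ring.
have -> : g \- polyfun q = f \- polyfun (q - c%:P).
  by apply/funext => x; rewrite /g /polyfun /= hornerD hornerN hornerC; ring.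
apply: bf; apply: leq_trans (size_polyD _ _) _; rewrite geq_max sq /= size_polyN.
by apply: leq_trans (size_polyC_leq1 _) _.
Qed.

Lemma proj_fix n P f (t : R) : metric_proj n P -> Ccont f -> -1 < t ->
  P (fun x => f x + t * (f x - (P f).[x])) = P f.
Proof.
move=> hP cf t1; set p := P f; set g := fun x => f x + t * (f x - p.[x]).
have cfp := @Cc_sub_poly f p cf.
have cg : Ccont g by apply: (Cc_ext _ (CcD cf (CcM (@Cc_cst t) cfp))).
apply: (best_unique cg (hP g cg)).
have [sf bf] := hP f cf.
have t1p : 0 < 1 + t by lra.
split => // q sq.
have -> : g \- polyfun p = (fun x => (1 + t) * (f \- polyfun p) x).
  by apply/funext => x; rewrite /g /polyfun /=; ring.
set q' := p + (1 + t)^-1 *: (q - p).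
have -> : g \- polyfun q = (fun x => (1 + t) * (f \- polyfun q') x).
  apply/funext => x; rewrite /g /polyfun /q' /= hornerD hornerZ hornerD hornerN.
  by field; apply/eqP => H; lra.
rewrite !supnorm_scale //; last exact: Cc_sub_poly.
rewrite (gtr0_norm t1p); apply: ler_wpM2l; first lra.
apply: bf; apply: leq_trans (size_polyD _ _) _; rewrite geq_max sf /=.
apply: leq_trans (size_scale_leq _ _) _; apply: leq_trans (size_polyD _ _) _.
by rewrite geq_max sq size_polyN sf.
Qed.

Lemma dual_cst L : dual L -> forall t : R, L (fun _ => t) = t * L (fun _ => 1).
Proof.
move=> [_ hs _] t; rewrite -hs; last exact: Cc_cst.
by congr L; apply/funext => x; rewrite mulr1.
Qed.

Lemma const_contra n P f (m phi : (R -> R) -> R) : metric_proj n P -> Ccont f ->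
  (forall t, m (fun _ => t) = t * m (fun _ => 1)) ->
  (forall t, phi (fun _ => t) = t * phi (fun _ => 1)) ->
  phi (fun _ => 1) != m (fun _ => 1) ->
  ~ (forall eps : R, 0 < eps -> exists delta : R, 0 < delta /\
    forall g, Ccont g -> 0 < supnorm (g \- f) < delta ->
      (phi (g \- f) - m (polyfun (P g - P f))) /
        (supnorm (g \- f) + supnorm (polyfun (P g - P f))) <= eps).
Proof.
move=> hP cf hm hphi neq H.
set d := phi (fun _ => 1) - m (fun _ => 1).
have d0 : d != 0 by rewrite subr_eq0.
have ad : 0 < `|d| / 4 by apply: divr_gt0; rewrite ?normr_gt0.
have [delta [dpos Hd]] := H _ ad.
have key : forall t, t != 0 -> `|t| < delta ->
    t * d <= `|d| / 4 * (`|t| + `|t|).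
  move=> t t0 tdel.
  have cg : Ccont (fun x => f x + t) by apply: (Cc_ext _ (CcD cf (@Cc_cst t))).
  have e1 : (fun x => f x + t) \- f = (fun _ => t) by apply/funext => x /=; ring.
  have e2 : polyfun (P (fun x => f x + t) - P f) = (fun _ => t).
    by apply/funext => x; rewrite (proj_shift t hP cf) /polyfun addrC addKr hornerC.
  have := Hd _ cg; rewrite e1 e2 supnorm_cst hm hphi normr_gt0 t0 tdel => /(_ isT).
  have tp : 0 < `|t| + `|t| by rewrite -normr_gt0 in t0; lra.
  by rewrite ler_pdivrMr // /d mulrBr.
case: (ltrP 0 d) => hd.
  have := key (delta / 2); rewrite gtr0_norm; last lra.
  rewrite (gtr0_norm hd) => /(_ _ _).
  have h1 : delta / 2 != 0 by apply/eqP => ?; lra.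
  have h2 : delta / 2 < delta by lra.
  move=> /(_ h1 h2) H1; nra.
have := key (- (delta / 2)); rewrite ltr0_norm; last lra.
have h0 : d < 0 by rewrite lt_neqAle d0 hd.
rewrite (ltr0_norm h0) => /(_ _ _).
have h1 : - (delta / 2) != 0 by apply/eqP => ?; lra.
have h2 : - - (delta / 2) < delta by lra.
move=> /(_ h1 h2) H1; nra.
Qed.

Lemma fp_contra n P f (gamma nu : (R -> R) -> R) : metric_proj n P -> Ccont f ->
  dual gamma -> dual nu -> gamma (f \- polyfun (P f)) < 0 ->
  ~ (forall eps : R, 0 < eps -> exists delta : R, 0 < delta /\
    forall g, Ccont g -> 0 < supnorm (g \- f) < delta ->
      (gamma (g \- f) - nu (polyfun (P g - P f))) /
        (supnorm (g \- f) + supnorm (polyfun (P g - P f))) <= eps).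
Proof.
move=> hP cf dg dn hG H.
set p := P f; set h := f \- polyfun p; set G := gamma h.
have ch : Ccont h := @Cc_sub_poly f p cf.
set N := supnorm h.
have N0 : 0 <= N := supnorm_ge0 ch.
have Npos : 0 < N.
  rewrite lt_neqAle N0 andbT; apply/negP => /eqP N00.
  have [_ _ [M HM]] := dg; have := HM h ch; rewrite -/N -N00 mulr0 normr_le0 -/G => /eqP G0.
  by move: hG; rewrite -/h -/G G0 ltxx.
have Gneg : G < 0 by exact: hG.
pose eps := - G / (2 * N).
have eps0 : 0 < eps by apply: divr_gt0; lra.
have epsN : eps * N = - G / 2 by rewrite /eps; field; apply/eqP => ?; lra.
have [delta [dpos Hd]] := H _ eps0.
pose t := - Num.min (1/2) (delta / (2 * N)).
have tl : t < 0 by rewrite /t oppr_lt0 lt_min; apply/andP; split; [lra | apply: divr_gt0; lra].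
have tg : -1 < t by rewrite /t ltrN2 gt_min; apply/orP; left; lra.
have tN : - t * N <= delta / 2.
  have : - t <= delta / (2 * N) by rewrite /t opprK ge_min lexx orbT.
  rewrite ler_pdivlMr; last lra.
  move=> H1; lra.
set g := fun x => f x + t * (f x - p.[x]).
have cg : Ccont g by apply: (Cc_ext _ (CcD cf (CcM (@Cc_cst t) ch))).
have e1 : g \- f = (fun x => t * h x) by apply/funext => x; rewrite /g /h /polyfun /=; ring.
have e2 : polyfun (P g - P f) = (fun _ => 0).
  by apply/funext => x; rewrite /g (proj_fix hP cf tg) -/p subrr /polyfun horner0.
have nu0 : nu (fun _ => 0) = 0 by rewrite (dual_cst dn) mul0r.
have := Hd _ cg; rewrite e1 e2 supnorm_cst nu0 normr0 addr0 subr0 supnorm_scale //.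
have [_ hs _] := dg; rewrite hs // -/G -/N (ltr0_norm tl).
have -> : 0 < - t * N < delta by apply/andP; split; [apply: mulr_gt0; lra | lra].
move=> /(_ isT); rewrite ler_pdivrMr; last by apply: mulr_gt0; lra.
move=> H1.
have : t * G <= eps * N * - t by rewrite -mulrA (mulrC N); lra.
rewrite epsN => H2; nra.
Qed.
End S.

Unset Implicit Arguments. Set Strict Implicit.

Theorem theorem5p1 (R : realType) (n : nat) (P : (R -> R) -> {poly R})
    (f : R -> R) (mu gamma : (R -> R) -> R) :
  (0 < n)%N -> metric_proj n P -> Ccont f -> dual mu -> dual gamma ->
  let p := polyfun (P f) in
  [/\ (total_mass mu != total_mass gamma ->
         ~ coderiv n P f mu gamma /\ ~ coderiv n P f gamma mu),
      (total_mass mu != 0 ->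
         ~ coderiv n P f mu (@zero_dual R) /\ ~ coderiv n P f (@zero_dual R) mu) &
      (gamma (f \- p) < 0 ->
         forall nu, dual nu -> ~ coderiv n P f nu gamma)].
Proof.
move=> _ hP cf dmu dgam p; split.
- move=> neq; split => -[_ H].
    apply: (const_contra hP cf (dual_cst dmu) (dual_cst dgam) _ H).
    by rewrite eq_sym.
  exact: (const_contra hP cf (dual_cst dgam) (dual_cst dmu) neq H).
- move=> neq; split => -[_ H].
    apply: (const_contra (phi := @zero_dual R) hP cf (dual_cst dmu) _ _ H).
      by move=> t; rewrite /zero_dual mulr0.
    by rewrite /zero_dual eq_sym.
  apply: (const_contra (m := @zero_dual R) hP cf _ (dual_cst dmu) _ H).
    by move=> t; rewrite /zero_dual mulr0.
  by [].
- move=> hg nu dnu [_ H]; exact: (fp_contra hP cf dgam dnu hg H).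
Qed.
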